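(* Let $n,m\ge1$, $C:\{0,1\}^n\to\{0,1\}^m$, $\varepsilon\in(0,1)$, $\tilde\varepsilon=(4/100)^2\varepsilon^2$, $t=\lfloor n/\tilde\varepsilon\rfloor$, and $\alpha>1$ such that $j^*$ (defined below) exists. Suppose $$\Pr_{y\leftarrow\mathcal{D}^C}\big[\mathcal{D}^C(y)\in(1\pm 100\sqrt{\tilde\varepsilon})\,\alpha2^{-m}\big]\le\tilde\varepsilon^{1/4}.$$ Let $c=\lceil 25/\sqrt{\tilde\varepsilon}\rceil$. Then (i) $2^{-(j^*-c)\tilde\varepsilon}\le 2^{28\sqrt{\tilde\varepsilon}}\alpha2^{-m}$ and $2^{-(j^*+c)\tilde\varepsilon}\ge 2^{-28\sqrt{\tilde\varepsilon}}\alpha2^{-m}$; (ii) $\sum_{j=j^*-c}^{j^*+c} h^C_j\le\tilde\varepsilon^{1/4}$; (iii) $\sum_{j\le j^*} h^C_j\in[g_H\pm\tilde\varepsilon^{1/4}]$; (iv) $\frac{1}{2^m}\sum_{j\le j^*}h^C_j\,2^{j\tilde\varepsilon}\in[g_{UH}\pm 4\tilde\varepsilon^{1/4}]$.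
   Context: For $C:\{0,1\}^n\to\{0,1\}^m$, $\mathcal{D}^C$ is the distribution on $\{0,1\}^m$ with $\mathcal{D}^C(y)=\Pr_{r\leftarrow\{0,1\}^n}[C(r)=y]$ ($r$ uniform). The $(\tilde\varepsilon,t)$-histogram of $\mathcal{D}^C$ is $h^C=(h^C_0,\dots,h^C_t)$ with $h^C_i=\sum_{y\in\mathcal{B}_i}\mathcal{D}^C(y)$, where $\mathcal{B}_i=\{y:\mathcal{D}^C(y)\in(2^{-(i+1)\tilde\varepsilon},2^{-i\tilde\varepsilon}]\}$; by convention $h^C_j=0$ for integers $j\notin\{0,\dots,t\}$. $j^*=\max\{j\in\mathbb{Z}_{\ge0}: 2^{-(j+1)\tilde\varepsilon}>\alpha2^{-m}\}$. $g_H=\Pr_{y\leftarrow\mathcal{D}^C}[\mathcal{D}^C(y)\ge\alpha2^{-m}]$ and $g_{UH}=\Pr_{y\leftarrow\{0,1\}^m\text{ uniform}}[\mathcal{D}^C(y)\ge\alpha2^{-m}]$. Notation: $[a\pm b]=[a-b,a+b]$ and $(1\pm\delta)x=[(1-\delta)x,(1+\delta)x]$. *)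

(* Defs.v *)
From Stdlib Require Import Reals Lra List ZArith Bool.
Import ListNotations.
Open Scope R_scope.

Fixpoint all_bits (k : nat) : list (list bool) :=
  match k with
  | O => [nil]
  | S k' => map (cons false) (all_bits k') ++ map (cons true) (all_bits k')
  end.

Definition sumR {A : Type} (l : list A) (f : A -> R) : R :=
  fold_right (fun a s => f a + s) 0 l.

Definition bits_eqb (x y : list bool) : bool :=
  if list_eq_dec bool_dec x y then true else false.

(* D^C(y) = Pr_{r uniform in {0,1}^n}[C r = y] *)
Definition DC (n : nat) (C : list bool -> list bool) (y : list bool) : R :=
  INR (length (filter (fun r => bits_eqb (C r) y) (all_bits n))) / 2 ^ n.

Definition Rleb (a b : R) : bool := if Rle_dec a b then true else false.
Definition Rltb (a b : R) : bool := if Rlt_dec a b then true else false.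

Definition pow2 (x : R) : R := Rpower 2 x.

Definition in_bucket (et : R) (i : Z) (p : R) : bool :=
  Rltb (pow2 (- (IZR i + 1) * et)) p && Rleb p (pow2 (- IZR i * et)).

(* (et,t)-histogram h^C_j, with h^C_j = 0 for j outside {0..t} *)
Definition hist (n m : nat) (C : list bool -> list bool) (et : R) (t : nat)
  (j : Z) : R :=
  if (0 <=? j)%Z && (j <=? Z.of_nat t)%Z then
    sumR (all_bits m)
      (fun y => if in_bucket et j (DC n C y) then DC n C y else 0)
  else 0.

(* sum_{j = a}^{b} f j over integers (0 if b < a) *)
Definition sumZ (a b : Z) (f : Z -> R) : R :=
  sumR (map (fun k => (a + Z.of_nat k)%Z) (seq 0 (Z.to_nat (b - a + 1)))) f.

(* g_H = Pr_{y <- D^C}[D^C(y) >= alpha 2^{-m}] *)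
Definition gH (n m : nat) (C : list bool -> list bool) (alpha : R) : R :=
  sumR (all_bits m)
    (fun y => if Rleb (alpha / 2 ^ m) (DC n C y) then DC n C y else 0).

(* g_UH = Pr_{y uniform in {0,1}^m}[D^C(y) >= alpha 2^{-m}] *)
Definition gUH (n m : nat) (C : list bool -> list bool) (alpha : R) : R :=
  sumR (all_bits m)
    (fun y => if Rleb (alpha / 2 ^ m) (DC n C y) then / 2 ^ m else 0).

Definition jstar_pred (m : nat) (et alpha : R) (j : nat) : Prop :=
  pow2 (- (INR j + 1) * et) > alpha / 2 ^ m.

(* Main.v *)
Require Import Defs.
From Stdlib Require Import Reals List ZArith Bool Lra Lia Psatz.
Import ListNotations.
Open Scope R_scope.

Lemma pow2_pos x : 0 < pow2 x.
Proof. unfold pow2, Rpower; apply exp_pos. Qed.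
Lemma pow2_plus x y : pow2 (x+y) = pow2 x * pow2 y.
Proof. unfold pow2; apply Rpower_plus. Qed.
Lemma pow2_lt x y : x < y -> pow2 x < pow2 y.
Proof. intros; unfold pow2; apply Rpower_lt; lra. Qed.
Lemma pow2_le x y : x <= y -> pow2 x <= pow2 y.
Proof. intros [H|H]; [left; now apply pow2_lt| subst; lra]. Qed.
Lemma pow2_lt_inv x y : pow2 x < pow2 y -> x < y.
Proof. intros H; destruct (Rlt_le_dec x y); auto. apply pow2_le in r; lra. Qed.
Lemma pow2_le_inv x y : pow2 x <= pow2 y -> x <= y.
Proof. intros H; destruct (Rle_lt_dec x y); auto. apply pow2_lt in r; lra. Qed.
Lemma pow2_opp x : pow2 (-x) = / pow2 x.
Proof. unfold pow2; apply Rpower_Ropp. Qed.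
Lemma pow2_INR k : pow2 (INR k) = 2 ^ k.
Proof. unfold pow2; apply Rpower_pow; lra. Qed.
Lemma pow2_0 : pow2 0 = 1.
Proof. unfold pow2; apply Rpower_O; lra. Qed.

Lemma exp_le_mono x y : x <= y -> exp x <= exp y.
Proof. intros [H|H]; [left; now apply exp_increasing | subst; lra]. Qed.
Lemma exp_ge1 x : 1 + x <= exp x.
Proof. destruct (Req_dec x 0). subst; rewrite exp_0; lra. left; now apply exp_ineq1. Qed.

Lemma ln2_lt : ln 2 < 3/4.
Proof.
  apply exp_lt_inv. rewrite exp_ln by lra.
  replace (3/4) with (3/32+3/32+3/32+3/32+3/32+3/32+3/32+3/32) by field.
  rewrite !exp_plus.
  assert (H: 1 + 3/32 <= exp (3/32)) by apply exp_ge1.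
  set (a := exp (3/32)) in *.
  assert (a^8 >= (35/32)^8). { apply Rle_ge, pow_incr; lra. }
  simpl in H0. lra.
Qed.

Lemma ln2_pos : 0 < ln 2.
Proof. rewrite <- ln_1. apply ln_increasing; lra. Qed.

Lemma KB s : 0 <= s <= 1/25 -> pow2 (28 * s) <= 1 + 100 * s.
Proof.
  intros Hs. unfold pow2, Rpower.
  pose proof ln2_lt; pose proof ln2_pos.
  apply Rle_trans with (exp (21*s/2 + 21*s/2)).
  { apply exp_le_mono. nra. }
  rewrite exp_plus.
  set (x := 21*s/2).
  assert (Hx: exp x * exp (-x) = 1) by (rewrite <- exp_plus; replace (x + -x) with 0 by ring; apply exp_0).
  pose proof (exp_ge1 (-x)). pose proof (exp_pos x).
  assert (P: 1 <= (1+100*s)*(1-x)^2) by (unfold x; simpl; nra).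
  assert (E1: exp x * (1 - x) <= 1) by (unfold x in *; nra).
  assert (0 < 1 - x) by (unfold x; lra).
  simpl in P. set (e := exp x) in *.
  assert (0 <= e*(1-x)) by (apply Rmult_le_pos; lra).
  assert (Q: (e*(1-x))*(e*(1-x)) <= 1).
  { apply Rle_trans with (1 * (e*(1-x))). apply Rmult_le_compat_r; lra. lra. }
  assert (R0: (e*e - (1+100*s)) * ((1-x)*(1-x)) <= 0) by nra.
  assert (0 < (1-x)*(1-x)) by nra.
  destruct (Rle_dec (e*e) (1+100*s)); auto.
  assert (0 < (e*e - (1+100*s)) * ((1-x)*(1-x))) by (apply Rmult_lt_0_compat; lra). lra.
Qed.

Lemma pow2_neg_lower e : 0 <= e -> 1 - e <= pow2 (- e).
Proof.
  intros He. unfold pow2, Rpower. pose proof ln2_lt; pose proof ln2_pos.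
  eapply Rle_trans; [|apply exp_ge1]. nra.
Qed.

Lemma sumR_ext {A} (l : list A) f g : (forall x, In x l -> f x = g x) -> sumR l f = sumR l g.
Proof. induction l; simpl; intros H; auto. rewrite H, IHl; auto. Qed.
Lemma sumR_le {A} (l : list A) f g : (forall x, In x l -> f x <= g x) -> sumR l f <= sumR l g.
Proof. induction l; simpl; intros H. lra. pose proof (H a (or_introl eq_refl)). pose proof (IHl (fun x h => H x (or_intror h))). lra. Qed.
Lemma sumR_plus {A} (l : list A) f g : sumR l (fun x => f x + g x) = sumR l f + sumR l g.
Proof. induction l; simpl. lra. rewrite IHl; ring. Qed.
Lemma sumR_scal {A} (l : list A) k f : sumR l (fun x => k * f x) = k * sumR l f.
Proof. induction l; simpl. ring. rewrite IHl; ring. Qed.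
Lemma sumR_const {A} (l : list A) k : sumR l (fun _ => k) = INR (length l) * k.
Proof. induction l. simpl; ring. replace (length (a::l)) with (S (length l)) by reflexivity. rewrite S_INR, Rmult_plus_distr_r, <- IHl. simpl. ring. Qed.
Lemma sumR_minus {A} (l : list A) f g : sumR l (fun x => f x - g x) = sumR l f - sumR l g.
Proof. induction l; simpl. lra. rewrite IHl; ring. Qed.
Lemma sumR_zero {A} (l : list A) : sumR l (fun _ => 0) = 0.
Proof. induction l; simpl; auto. rewrite IHl; ring. Qed.
Lemma sumR_nonneg {A} (l : list A) f : (forall x, In x l -> 0 <= f x) -> 0 <= sumR l f.
Proof. intros H. apply Rle_trans with (sumR l (fun _ : A => 0)). rewrite sumR_zero; lra. apply sumR_le; auto. Qed.
Lemma sumR_swap {A B} (l1 : list A) (l2 : list B) F :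
  sumR l1 (fun a => sumR l2 (fun b => F a b)) = sumR l2 (fun b => sumR l1 (fun a => F a b)).
Proof.
  induction l1; simpl. now rewrite sumR_zero.
  rewrite IHl1, <- sumR_plus. reflexivity.
Qed.

Lemma sum_none {A} (l : list A) (P : A -> bool) g :
  (forall x, In x l -> P x = false) -> sumR l (fun j => if P j then g j else 0) = 0.
Proof.
  intros H. transitivity (sumR l (fun _ : A => 0)); [|apply sumR_zero]. apply sumR_ext. intros x Hx. now rewrite H.
Qed.

Lemma sum_unique {A} (l : list A) (P : A -> bool) g :
  NoDup l -> (forall a b, P a = true -> P b = true -> a = b) ->
  forall x, In x l -> P x = true -> sumR l (fun j => if P j then g j else 0) = g x.
Proof.
  induction l as [|a l IH]; intros ND U x Hx Px; simpl in *. contradiction.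
  inversion ND; subst. destruct Hx as [->|Hx].
  - rewrite Px, (sum_none l P g). ring. intros z Hz. destruct (P z) eqn:E; auto.
    assert (z = x) by (apply U; auto). subst; contradiction.
  - destruct (P a) eqn:E.
    + assert (a = x) by (apply U; auto). subst; contradiction.
    + erewrite IH; eauto. ring.
Qed.

Lemma existsb_false {A} (f : A -> bool) l : existsb f l = false -> forall x, In x l -> f x = false.
Proof.
  induction l; simpl; intros H x Hx. contradiction.
  apply orb_false_iff in H. destruct H. destruct Hx; subst; auto.
Qed.

Definition Lz (a b : Z) := map (fun k => (a + Z.of_nat k)%Z) (seq 0 (Z.to_nat (b - a + 1))).

Lemma Lz_in a b x : In x (Lz a b) <-> (a <= x <= b)%Z.
Proof.
  unfold Lz. rewrite in_map_iff. split.
  - intros [k [<- Hk]]. apply in_seq in Hk. lia.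
  - intros H. exists (Z.to_nat (x - a)). split. lia. apply in_seq. lia.
Qed.

Lemma Lz_NoDup a b : NoDup (Lz a b).
Proof.
  unfold Lz. apply NoDup_map_NoDup_ForallPairs. intros x y _ _ H. lia. apply seq_NoDup.
Qed.

Lemma length_all_bits k : length (all_bits k) = (2 ^ k)%nat.
Proof. induction k; simpl; auto. rewrite length_app, !length_map, IHk. lia. Qed.

Lemma Rleb_true a b : a <= b -> Rleb a b = true.
Proof. unfold Rleb; destruct (Rle_dec a b); auto; lra. Qed.
Lemma Rleb_true_iff a b : Rleb a b = true <-> a <= b.
Proof. unfold Rleb; destruct (Rle_dec a b); split; auto; discriminate. Qed.
Lemma Rltb_true_iff a b : Rltb a b = true <-> a < b.
Proof. unfold Rltb; destruct (Rlt_dec a b); split; auto; discriminate. Qed.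

Lemma in_bucket_iff et j p : in_bucket et j p = true <->
  pow2 (- (IZR j + 1) * et) < p /\ p <= pow2 (- IZR j * et).
Proof. unfold in_bucket. rewrite andb_true_iff, Rltb_true_iff, Rleb_true_iff. tauto. Qed.

Lemma bucket_unique et a b p : 0 < et -> in_bucket et a p = true -> in_bucket et b p = true -> a = b.
Proof.
  intros He Ha Hb. apply in_bucket_iff in Ha, Hb.
  destruct (Z.lt_trichotomy a b) as [H|[H|H]]; auto; exfalso.
  - assert (IZR a + 1 <= IZR b) by (rewrite <- plus_IZR; apply IZR_le; lia).
    assert (pow2 (- IZR b * et) <= pow2 (- (IZR a + 1) * et)) by (apply pow2_le; nra). lra.
  - assert (IZR b + 1 <= IZR a) by (rewrite <- plus_IZR; apply IZR_le; lia).
    assert (pow2 (- IZR a * et) <= pow2 (- (IZR b + 1) * et)) by (apply pow2_le; nra). lra.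
Qed.

Lemma bucket_exists et p : 0 < et -> 0 < p <= 1 -> forall K : nat,
  pow2 (- (INR K + 1) * et) < p -> exists j : nat, (j <= K)%nat /\ in_bucket et (Z.of_nat j) p = true.
Proof.
  intros He Hp K. induction K; intros H.
  - exists 0%nat. split. lia. apply in_bucket_iff. simpl in *. split. lra.
    replace (- 0 * et) with 0 by ring. rewrite pow2_0. lra.
  - destruct (Rlt_le_dec (pow2 (- (INR K + 1) * et)) p).
    + destruct (IHK r) as [j [Hj Hb]]. exists j; split; auto.
    + exists (S K). split; auto. apply in_bucket_iff. rewrite <- INR_IZR_INZ.
      rewrite S_INR in *. split; auto.
Qed.

Lemma DC_bounds n C y : 0 <= DC n C y <= 1 /\ (0 < DC n C y -> / 2 ^ n <= DC n C y).
Proof.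
  unfold DC. set (L := length _).
  assert (HL: (L <= 2 ^ n)%nat) by (unfold L; rewrite <- length_all_bits; apply filter_length_le).
  assert (H2: 0 < 2 ^ n) by (apply pow_lt; lra).
  assert (HL': INR L <= 2 ^ n) by (replace (2^n) with (INR (2^n)) by (rewrite pow_INR; simpl; f_equal; ring); apply le_INR; auto).
  pose proof (pos_INR L).
  repeat split.
  - unfold Rdiv; apply Rmult_le_pos; auto. left; apply Rinv_0_lt_compat; auto.
  - unfold Rdiv. apply Rmult_le_reg_r with (2^n); auto. rewrite Rmult_assoc, Rinv_l; lra.
  - intros Hp. destruct L as [|L'].
    + simpl in Hp. unfold Rdiv in Hp; rewrite Rmult_0_l in Hp; lra.
    + rewrite S_INR. unfold Rdiv. pose proof (pos_INR L').
      rewrite <- (Rmult_1_l (/ 2^n)) at 1. apply Rmult_le_compat_r. left; apply Rinv_0_lt_compat; auto. lra.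
Qed.

Lemma hist_expand n m C et t j w :
  hist n m C et t j * w = sumR (all_bits m) (fun y =>
    if ((0 <=? j)%Z && (j <=? Z.of_nat t)%Z) && in_bucket et j (DC n C y)
    then DC n C y * w else 0).
Proof.
  unfold hist. destruct ((0 <=? j)%Z && (j <=? Z.of_nat t)%Z); simpl.
  - rewrite Rmult_comm, <- sumR_scal. apply sumR_ext. intros y _.
    destruct (in_bucket _ _ _); ring.
  - rewrite sumR_zero; ring.
Qed.

Lemma sumZ_hist n m C et t a b (w : Z -> R) :
  sumZ a b (fun j => hist n m C et t j * w j) =
  sumR (all_bits m) (fun y => sumR (Lz a b) (fun j =>
    if ((0 <=? j)%Z && (j <=? Z.of_nat t)%Z) && in_bucket et j (DC n C y)
    then DC n C y * w j else 0)).
Proof.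
  change (sumZ a b ?f) with (sumR (Lz a b) f).
  rewrite <- sumR_swap. apply sumR_ext. intros j _. apply hist_expand.
Qed.

Lemma sumZ_hist1 n m C et t a b :
  sumZ a b (hist n m C et t) =
  sumR (all_bits m) (fun y => sumR (Lz a b) (fun j =>
    if ((0 <=? j)%Z && (j <=? Z.of_nat t)%Z) && in_bucket et j (DC n C y)
    then DC n C y * 1 else 0)).
Proof.
  rewrite <- (sumZ_hist n m C et t a b (fun _ => 1)).
  change (sumZ a b ?f) with (sumR (Lz a b) f). apply sumR_ext; intros; ring.
Qed.
Theorem mainTheorem2
  (n m : nat) (C : list bool -> list bool)
  (Hn : (1 <= n)%nat) (Hm : (1 <= m)%nat)
  (HC : forall r, In r (all_bits n) -> length (C r) = m)
  (eps et : R) (Heps : 0 < eps < 1)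
  (Het : et = (4 / 100) ^ 2 * eps ^ 2)
  (t : nat) (Ht : INR t <= INR n / et < INR t + 1)
  (alpha : R) (Halpha : 1 < alpha)
  (jstar : nat)
  (Hjstar : jstar_pred m et alpha jstar /\
            forall j : nat, jstar_pred m et alpha j -> (j <= jstar)%nat)
  (Hmass : sumR (all_bits m)
             (fun y =>
                if Rleb ((1 - 100 * sqrt et) * (alpha / 2 ^ m)) (DC n C y)
                   && Rleb (DC n C y) ((1 + 100 * sqrt et) * (alpha / 2 ^ m))
                then DC n C y else 0)
           <= Rpower et (1 / 4))
  (c : nat) (Hc : INR c - 1 < 25 / sqrt et <= INR c) :
  (pow2 (- (INR jstar - INR c) * et) <= pow2 (28 * sqrt et) * (alpha / 2 ^ m)
   /\ pow2 (- (INR jstar + INR c) * et) >= pow2 (- 28 * sqrt et) * (alpha / 2 ^ m))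
  /\ sumZ (Z.of_nat jstar - Z.of_nat c) (Z.of_nat jstar + Z.of_nat c)
       (hist n m C et t) <= Rpower et (1 / 4)
  /\ (gH n m C alpha - Rpower et (1 / 4)
        <= sumZ 0 (Z.of_nat jstar) (hist n m C et t)
        <= gH n m C alpha + Rpower et (1 / 4))
  /\ (gUH n m C alpha - 4 * Rpower et (1 / 4)
        <= / 2 ^ m * sumZ 0 (Z.of_nat jstar)
                       (fun j => hist n m C et t j * pow2 (IZR j * et))
        <= gUH n m C alpha + 4 * Rpower et (1 / 4)).
Proof.
  set (s := sqrt et) in *.
  assert (Hs: s = 4/100 * eps).
  { unfold s; rewrite Het. replace ((4/100)^2*eps^2) with ((4/100*eps)^2) by ring.
    apply sqrt_pow2. lra. }
  assert (Hs1: 0 < s < 1/25) by lra.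
  assert (Hets: et = s * s) by (rewrite Het, Hs; ring).
  assert (Hetpos: 0 < et) by nra.
  assert (H2m: 0 < 2^m) by (apply pow_lt; lra).
  set (u := / 2^m) in *.
  assert (Hu: 0 < u) by (apply Rinv_0_lt_compat; lra).
  set (A := alpha / 2^m) in *.
  assert (HAu: A = alpha * u) by reflexivity.
  assert (HA: 0 < A) by nra.
  assert (HuA: u < A) by nra.
  set (E := Rpower et (1/4)) in *.
  assert (HE: et <= E).
  { unfold E, Rpower. rewrite <- (exp_ln et) at 1 by lra. apply exp_le_mono.
    assert (ln et < 0) by (rewrite <- ln_1; apply ln_increasing; nra). lra. }
  destruct Hjstar as [HJ1 HJmax]. unfold jstar_pred in HJ1. fold A in HJ1.
  assert (HJ2: pow2 (-(INR jstar + 2) * et) <= A).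
  { destruct (Rle_lt_dec (pow2 (-(INR jstar + 2) * et)) A) as [h|h]; auto. exfalso.
    assert (S jstar <= jstar)%nat; [|lia]. apply HJmax. unfold jstar_pred. rewrite S_INR.
    replace (INR jstar + 1 + 1) with (INR jstar + 2) by ring. apply h. }
  assert (Hc1: (INR c - 1) * s < 25).
  { destruct Hc as [Hc _]. apply Rmult_lt_compat_r with (r := s) in Hc; [|lra].
    unfold Rdiv in Hc. rewrite Rmult_assoc, Rinv_l in Hc; lra. }
  assert (Hce1: (INR c + 2) * et <= 28 * s) by (rewrite Hets; nra).
  assert (Hce2: (INR c - 1) * et <= 28 * s) by (rewrite Hets; nra).
  assert (Hce3: INR c * et <= 28 * s) by (rewrite Hets; nra).
  assert (KB1: pow2 (28 * s) <= 1 + 100 * s) by (apply KB; lra).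
  assert (KB2: 1 - 100 * s <= pow2 (- 28 * s)).
  { replace (-28 * s) with (- (28 * s)) by ring. rewrite pow2_opp.
    pose proof (pow2_pos (28 * s)).
    apply Rmult_le_reg_r with (pow2 (28 * s)); auto. rewrite Rinv_l by lra. nra. }
  assert (Hi1: pow2 (- (INR jstar - INR c) * et) <= pow2 (28 * s) * A).
  { replace (- (INR jstar - INR c) * et) with (-(INR jstar+2)*et + (INR c+2)*et) by ring.
    rewrite pow2_plus, Rmult_comm. apply Rmult_le_compat; try (left; apply pow2_pos); auto.
    apply pow2_le; auto. }
  assert (Hi2: pow2 (- (INR jstar + INR c) * et) >= pow2 (- 28 * s) * A).
  { replace (- (INR jstar + INR c) * et) with (-(INR jstar+1)*et + -((INR c-1)*et)) by ring.
    rewrite pow2_plus, Rmult_comm. apply Rle_ge, Rmult_le_compat; try (left; apply pow2_pos); try lra.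
    apply pow2_le; lra. }
  split; [split; auto|].
  set (mass := fun y => if Rleb ((1 - 100 * s) * A) (DC n C y) && Rleb (DC n C y) ((1 + 100 * s) * A)
                 then DC n C y else 0) in *.
  assert (Hmass': sumR (all_bits m) mass <= E) by exact Hmass.
  assert (MC: forall y, (1 - 100*s)*A <= DC n C y <= (1 + 100*s)*A -> mass y = DC n C y).
  { intros y [h1 h2]. unfold mass. now rewrite !Rleb_true. }
  assert (M0: forall y, 0 <= mass y).
  { intros y. unfold mass. destruct (DC_bounds n C y). destruct (_ && _); lra. }
  assert (UQ: forall y a b, (((0 <=? a)%Z && (a <=? Z.of_nat t)%Z) && in_bucket et a (DC n C y)) = true ->
     (((0 <=? b)%Z && (b <=? Z.of_nat t)%Z) && in_bucket et b (DC n C y)) = true -> a = b).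
  { intros y a b h1 h2. apply andb_prop in h1, h2. eapply bucket_unique; [exact Hetpos| apply h1 | apply h2]. }
  assert (NB: forall y, (1 + 100*s)*A < DC n C y -> exists j : nat, (j <= jstar)%nat /\ (j <= t)%nat /\
             in_bucket et (Z.of_nat j) (DC n C y) = true).
  { intros y Hy. destruct (DC_bounds n C y) as [[D0 D1] Dn].
    assert (pow2 (-(INR jstar+1)*et) < DC n C y).
    { replace (-(INR jstar+1)*et) with (-(INR jstar+2)*et + et) by ring. rewrite pow2_plus.
      assert (pow2 et <= pow2 (28*s)) by (apply pow2_le; nra).
      pose proof (pow2_pos et). pose proof (pow2_pos (-(INR jstar+2)*et)).
      apply Rle_lt_trans with (A * pow2 (28 * s)); [|nra].
      apply Rmult_le_compat; lra. }
    destruct (bucket_exists et (DC n C y) Hetpos ltac:(nra) jstar H) as [j [Hj Hb]].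
    exists j; repeat split; auto.
    assert (Hn2: pow2 (- INR n) <= DC n C y) by (rewrite pow2_opp, pow2_INR; apply Dn; nra).
    apply in_bucket_iff in Hb as [_ Hb]. rewrite <- INR_IZR_INZ in Hb.
    assert (HH: - INR n <= - INR j * et) by (apply pow2_le_inv; lra).
    assert (INR j <= INR n / et).
    { unfold Rdiv. apply Rmult_le_reg_r with et; auto. rewrite Rmult_assoc, Rinv_l; lra. }
    assert (INR j < INR (S t)) by (rewrite S_INR; lra). apply INR_lt in H1. lia. }
  set (J := Z.of_nat jstar).
  assert (NB2: forall y, (forall j, In j (Lz 0 J) ->
      (((0 <=? j)%Z && (j <=? Z.of_nat t)%Z) && in_bucket et j (DC n C y)) = false) ->
      A <= DC n C y -> mass y = DC n C y).
  { intros y Hno HAy. destruct (Rle_dec (DC n C y) ((1+100*s)*A)) as [h|h].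
    - apply MC. split; auto. nra.
    - destruct (NB y ltac:(lra)) as [j [Hj1 [Hj2 Hb]]].
      assert (In (Z.of_nat j) (Lz 0 J)) by (apply Lz_in; unfold J; lia).
      specialize (Hno _ H). rewrite Hb in Hno.
      assert (((0 <=? Z.of_nat j)%Z && (Z.of_nat j <=? Z.of_nat t)%Z) = true).
      { apply andb_true_iff; split; apply Z.leb_le; lia. }
      rewrite H0 in Hno. discriminate. }
  assert (BR: forall y j, (j <= J)%Z -> in_bucket et j (DC n C y) = true -> A < DC n C y).
  { intros y j hj hb. apply in_bucket_iff in hb as [hb _].
    assert (IZR j <= INR jstar) by (rewrite INR_IZR_INZ; apply IZR_le; auto).
    assert (pow2 (-(INR jstar+1)*et) <= pow2 (-(IZR j+1)*et)) by (apply pow2_le; nra). lra. }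
  split.
  {
    rewrite sumZ_hist1. eapply Rle_trans; [|exact Hmass'].
    apply sumR_le. intros y _.
    destruct (existsb (fun j => ((0 <=? j)%Z && (j <=? Z.of_nat t)%Z) && in_bucket et j (DC n C y))
       (Lz (Z.of_nat jstar - Z.of_nat c) (Z.of_nat jstar + Z.of_nat c))) eqn:Ex.
    - apply existsb_exists in Ex as [j [Hj Pj]].
      rewrite (sum_unique _ _ _ (Lz_NoDup _ _) (UQ y) j Hj Pj).
      apply Lz_in in Hj. apply andb_prop in Pj as [_ Pj]. apply in_bucket_iff in Pj as [b1 b2].
      assert (IZR j >= INR jstar - INR c).
      { rewrite !INR_IZR_INZ, <- minus_IZR. apply Rle_ge, IZR_le; lia. }
      assert (IZR j <= INR jstar + INR c).
      { rewrite !INR_IZR_INZ, <- plus_IZR. apply IZR_le; lia. }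
      rewrite MC. lra. split.
      + assert (pow2 (-(INR jstar + INR c + 1)*et) <= pow2 (-(IZR j+1)*et)) by (apply pow2_le; nra).
        replace (-(INR jstar + INR c + 1)*et) with (-(INR jstar+1)*et + -(INR c * et)) in H1 by ring.
        rewrite pow2_plus in H1.
        assert (pow2 (-28*s) <= pow2 (-(INR c * et))) by (apply pow2_le; lra).
        pose proof (pow2_pos (-(INR jstar+1)*et)). pose proof (pow2_pos (-28*s)).
        assert (A * pow2 (-28*s) <= pow2 (-(INR jstar+1)*et) * pow2 (-(INR c * et)))
          by (apply Rmult_le_compat; lra).
        nra.
      + assert (pow2 (-IZR j*et) <= pow2 (-(INR jstar - INR c)*et)) by (apply pow2_le; nra).
        nra.
    - rewrite sum_none. apply M0. apply existsb_false; auto. }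
  assert (PW3: forall y, In y (all_bits m) ->
     (if Rleb A (DC n C y) then DC n C y else 0) - mass y <=
     sumR (Lz 0 J) (fun j => if ((0 <=? j)%Z && (j <=? Z.of_nat t)%Z) && in_bucket et j (DC n C y)
        then DC n C y * 1 else 0) <= (if Rleb A (DC n C y) then DC n C y else 0)).
  { intros y _. pose proof (M0 y).
    destruct (existsb (fun j => ((0 <=? j)%Z && (j <=? Z.of_nat t)%Z) && in_bucket et j (DC n C y))
       (Lz 0 J)) eqn:Ex.
    - apply existsb_exists in Ex as [j [Hj Pj]].
      rewrite (sum_unique _ _ _ (Lz_NoDup _ _) (UQ y) j Hj Pj).
      apply Lz_in in Hj. apply andb_prop in Pj as [_ Pj].
      pose proof (BR y j ltac:(lia) Pj). rewrite Rleb_true by lra. lra.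
    - rewrite sum_none by (apply existsb_false; auto).
      destruct (Rle_dec A (DC n C y)) as [h|h].
      + rewrite Rleb_true by auto. rewrite NB2; auto. 2: apply existsb_false; auto.
        lra.
      + unfold Rleb. destruct (Rle_dec A (DC n C y)); try contradiction. lra. }
  split.
  {
    rewrite sumZ_hist1. unfold gH. fold A. split.
    - apply Rle_trans with (sumR (all_bits m) (fun y => (if Rleb A (DC n C y) then DC n C y else 0) - mass y)).
      + rewrite sumR_minus. lra.
      + apply sumR_le. intros y Hy. apply PW3; auto.
    - apply Rle_trans with (sumR (all_bits m) (fun y => (if Rleb A (DC n C y) then DC n C y else 0))).
      + apply sumR_le. intros y Hy. apply PW3; auto.
      + assert (0 <= E) by lra. lra. }
  set (k := 1 - pow2 (- et)).
  assert (Hk: 0 <= k <= E).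
  { unfold k. pose proof (pow2_neg_lower et ltac:(lra)).
    assert (pow2 (-et) <= 1) by (rewrite <- pow2_0; apply pow2_le; lra). lra. }
  assert (PW4: forall y, In y (all_bits m) ->
     (if Rleb A (DC n C y) then u else 0) - mass y - k * u <=
     u * sumR (Lz 0 J) (fun j => if ((0 <=? j)%Z && (j <=? Z.of_nat t)%Z) && in_bucket et j (DC n C y)
        then DC n C y * pow2 (IZR j * et) else 0) <= (if Rleb A (DC n C y) then u else 0)).
  { intros y _. pose proof (M0 y).
    destruct (existsb (fun j => ((0 <=? j)%Z && (j <=? Z.of_nat t)%Z) && in_bucket et j (DC n C y))
       (Lz 0 J)) eqn:Ex.
    - apply existsb_exists in Ex as [j [Hj Pj]].
      rewrite (sum_unique _ _ _ (Lz_NoDup _ _) (UQ y) j Hj Pj).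
      apply Lz_in in Hj. apply andb_prop in Pj as [_ Pj].
      pose proof (BR y j ltac:(lia) Pj). rewrite Rleb_true by lra.
      apply in_bucket_iff in Pj as [b1 b2].
      pose proof (pow2_pos (IZR j * et)).
      assert (V1: DC n C y * pow2 (IZR j * et) <= 1).
      { replace 1 with (pow2 (- IZR j * et) * pow2 (IZR j * et)).
        apply Rmult_le_compat_r; lra. rewrite <- pow2_plus, <- pow2_0. f_equal; ring. }
      assert (V2: pow2 (- et) <= DC n C y * pow2 (IZR j * et)).
      { replace (pow2 (- et)) with (pow2 (- (IZR j + 1) * et) * pow2 (IZR j * et)).
        apply Rmult_le_compat_r; lra. rewrite <- pow2_plus. f_equal; ring. }
      unfold k. split; nra.
    - rewrite sum_none by (apply existsb_false; auto).
      destruct (Rle_dec A (DC n C y)) as [h|h].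
      + rewrite Rleb_true by auto. rewrite NB2; auto. 2: apply existsb_false; auto.
        nra.
      + unfold Rleb. destruct (Rle_dec A (DC n C y)); try contradiction. nra. }
  {
    rewrite (sumZ_hist n m C et t 0 J (fun j => pow2 (IZR j * et))).
    rewrite <- sumR_scal. unfold gUH. fold A. fold u. split.
    - apply Rle_trans with (sumR (all_bits m) (fun y => (if Rleb A (DC n C y) then u else 0) - mass y - k * u)).
      + rewrite !sumR_minus, sumR_const, length_all_bits, pow_INR.
        replace (INR 2) with 2 by (simpl; ring).
        replace (2 ^ m * (k * u)) with k by (unfold u; field; lra). lra.
      + apply sumR_le. intros y Hy. apply PW4; auto.
    - apply Rle_trans with (sumR (all_bits m) (fun y => (if Rleb A (DC n C y) then u else 0))).
      + apply sumR_le. intros y Hy. apply PW4; auto.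
      + lra. }
Qed.
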